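(* For every graph $G$ on $[n]$ (with $n\ge3$), the scattering matroid $\mathcal S(G)$ has rank at most $2n-3$. For the complete graph $K_n$ this bound is attained: $\mathrm{rank}\,\mathcal S(K_n)=2n-3$.
   Context: $G\subseteq\binom{[n]}{2}$ is a simple graph. The scattering matrix $S_G$ is the $2n\times|G|$ matrix over the field $\mathbb C(x_1,\dots,x_n)$ whose columns are indexed by the edges $ij\in G$ (with $i<j$). In column $ij$: - the entry in row $k\in[n]$ is $1$ if $k\in\{i,j\}$ and $0$ otherwise; - the entry in row $n+i$ is $1/(x_i-x_j)$; - the entry in row $n+j$ is $1/(x_j-x_i)$; - all other entries are $0$. The scattering matroid $\mathcal S(G)$ is the column matroid of $S_G$ over $\mathbb C(x_1,\dots,x_n)$. Its rank is the rank of $S_G$. *)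

(* Defs.v *)
From HB Require Import structures.
From mathcomp Require Import all_boot all_algebra.
From mathcomp Require Import complex fraction.
From mathcomp Require Import mpoly.
From mathcomp Require Import Rstruct.
Set Implicit Arguments. Unset Strict Implicit. Unset Printing Implicit Defensive.
Import GRing.Theory.
Local Open Scope ring_scope.

Definition CC : fieldType := complex Rdefinitions.R.

Definition ratfun (n : nat) : fieldType := {fraction {mpoly CC[n]}}.

Definition xvar (n : nat) (i : 'I_n) : ratfun n :=
  FracField.tofrac ('X_i : {mpoly CC[n]}).

Definition simple_graph (n : nat) (G : {set 'I_n * 'I_n}) : Prop :=
  forall e, e \in G -> (e.1 < e.2)%N.

Definition complete_graph (n : nat) : {set 'I_n * 'I_n} :=
  [set e : 'I_n * 'I_n | (e.1 < e.2)%N].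

Definition scat_col (n : nat) (e : 'I_n * 'I_n) : 'cV[ratfun n]_(n + n) :=
  col_mx
    (\col_(k < n) ((k == e.1) || (k == e.2))%:R)
    (\col_(k < n) (if k == e.1 then (xvar e.1 - xvar e.2)^-1
                   else if k == e.2 then (xvar e.2 - xvar e.1)^-1
                   else 0)).

Definition scattering_matrix (n : nat) (G : {set 'I_n * 'I_n})
  : 'M[ratfun n]_(n + n, #|G|) :=
  \matrix_(r, c) scat_col (enum_val c) r ord0.

Definition scattering_rank (n : nat) (G : {set 'I_n * 'I_n}) : nat :=
  \rank (scattering_matrix G).

(* Main.v *)
Require Import Defs.
From HB Require Import structures.
From mathcomp Require Import all_boot all_algebra.
From mathcomp Require Import fraction mpoly.
From mathcomp Require Import ring zify.
Set Implicit Arguments. Unset Strict Implicit. Unset Printing Implicit Defensive.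
Import GRing.Theory.
Local Open Scope ring_scope.

Lemma kernel_alg (F : fieldType) n (p q : 'I_n) (a b x : 'I_n -> F) :
  p != q -> (forall i j, i != j -> x i != x j) ->
  (forall i j, i != j -> b i - b j = - (a i + a j) * (x i - x j)) ->
  exists c1 c2 c3 : F, forall k,
    a k = c2 + c3 * x k /\ b k = c1 - 2 * c2 * x k - c3 * x k ^+ 2.
Proof.
move=> pq xd E.
have dqp : x q - x p != 0 by rewrite subr_eq0 eq_sym xd.
set c3 := (a q - a p) / (x q - x p).
set c2 := a p - c3 * x p.
exists (b p + 2 * c2 * x p + c3 * x p ^+ 2), c2, c3.
have ha : forall k, a k = c2 + c3 * x k.
  move=> k.
  have [-> | kp] := eqVneq k p; first by rewrite /c2; ring.
  have [-> | kq] := eqVneq k q.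
    by rewrite /c2 /c3; field.
  have Epk := E p k ltac:(by rewrite eq_sym).
  have Eqk := E q k ltac:(by rewrite eq_sym).
  have Epq := E p q pq.
  have dk : a k * (x q - x p) = a p * (x p - x k) - a q * (x q - x k) - (a p + a q) * (x p - x q).
    apply/eqP; rewrite -subr_eq0; apply/eqP.
    have -> : a k * (x q - x p) - (a p * (x p - x k) - a q * (x q - x k) - (a p + a q) * (x p - x q))
      = ((b p - b k) - (b q - b k) - (b p - b q)) by rewrite Epk Eqk Epq; ring.
    ring.
  have -> : a k = (a p * (x p - x k) - a q * (x q - x k) - (a p + a q) * (x p - x q)) / (x q - x p).
    by rewrite -dk mulfK.
  by rewrite /c2 /c3; field.
move=> k; split; first exact: ha.
have [-> | kp] := eqVneq k p; first by rewrite /c2; ring.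
have Epk := E p k ltac:(by rewrite eq_sym).
have -> : b k = b p + (a p + a k) * (x p - x k).
  by rewrite -[b k]opprK -[- b k](addKr (b p)) Epk; ring.
by rewrite (ha k) (ha p); ring.
Qed.

Lemma xvar_neq n (i j : 'I_n) : i != j -> xvar i != xvar j.
Proof.
move=> ij; rewrite /xvar tofrac_eq; apply/eqP => h.
have := @mcoeffXU n CC i i; rewrite h mcoeffXU eqxx eq_sym (negbTE ij).
by move/eqP; rewrite eq_sym oner_eq0.
Qed.

Lemma sum_two (F : nzRingType) n (i j : 'I_n) (g : 'I_n -> F) :
  i != j -> (forall k, k != i -> k != j -> g k = 0) -> \sum_k g k = g i + g j.
Proof.
move=> ij h; rewrite (bigD1 i) //= (bigD1 j) 1?eq_sym //= big1 ?addr0 //.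
by move=> k /andP [ki kj]; apply: h.
Qed.

Section Col.
Variable n : nat.
Local Notation F := (ratfun n).

Lemma col_formula (v : 'rV[F]_(n + n)) (e : 'I_n * 'I_n) : e.1 != e.2 ->
  (v *m scat_col e) 0 0 =
    v 0 (lshift n e.1) + v 0 (lshift n e.2)
    + v 0 (rshift n e.1) * (xvar e.1 - xvar e.2)^-1
    + v 0 (rshift n e.2) * (xvar e.2 - xvar e.1)^-1.
Proof.
move=> ij; rewrite /scat_col -{1}[v]hsubmxK mul_row_col mxE !mxE.
rewrite (@sum_two _ _ e.1 e.2) //; last first.
  by move=> k k1 k2; rewrite !mxE (negbTE k1) (negbTE k2) mulr0.
rewrite (@sum_two _ _ e.1 e.2 (fun k => rsubmx v 0 k * _)) //; last first.
  by move=> k k1 k2; rewrite !mxE (negbTE k1) (negbTE k2) mulr0.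
rewrite !mxE eqxx /= eq_sym (negbTE ij) eqxx orbT !mulr1 addrA.
done.
Qed.

Lemma smat_col (G : {set 'I_n * 'I_n}) (v : 'rV[F]_(n + n)) c :
  (v *m scattering_matrix G) 0 c = (v *m scat_col (enum_val c)) 0 0.
Proof. by rewrite !mxE; apply: eq_bigr => r _; rewrite mxE. Qed.

End Col.

Lemma kid (F : fieldType) (y1 y2 : F) : y1 - y2 != 0 -> y2 - y1 != 0 ->
  [/\ 0 + 0 + 1 / (y1 - y2) + 1 / (y2 - y1) = 0,
       1 + 1 + -2 * y1 / (y1 - y2) + -2 * y2 / (y2 - y1) = 0 &
       y1 + y2 + - y1 ^+ 2 / (y1 - y2) + - y2 ^+ 2 / (y2 - y1) = 0].
Proof. by move=> d1 d2; split; field; rewrite d1 d2. Qed.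

Section K.
Variable n : nat.
Local Notation F := (ratfun n).

Definition KA : 'M[F]_(3, n) := \matrix_(r < 3, k < n) [:: 0; 1; xvar k]`_r.
Definition KB : 'M[F]_(3, n) :=
  \matrix_(r < 3, k < n) [:: 1; -2 * xvar k; - xvar k ^+ 2]`_r.
Definition KK : 'M[F]_(3, n + n) := row_mx KA KB.

Lemma KK_S (G : {set 'I_n * 'I_n}) : simple_graph G -> KK *m scattering_matrix G = 0.
Proof.
move=> sG; apply/row_matrixP => r; rewrite row_mul row0; apply/rowP => c.
rewrite smat_col [RHS]mxE; set e := enum_val c.
have lt : (e.1 < e.2)%N by apply: sG; exact: enum_valP.
have ne : e.1 != e.2 by rewrite neq_ltn lt.
have d1 : xvar e.1 - xvar e.2 != 0 by rewrite subr_eq0 xvar_neq.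
have d2 : xvar e.2 - xvar e.1 != 0 by rewrite subr_eq0 xvar_neq // eq_sym.
rewrite col_formula // /KK row_row_mx !row_mxEl !row_mxEr !mxE.
have [k1 k2 k3] := kid d1 d2.
by case: r => [[|[|[|r]]] hr] //=.
Qed.

End K.

Lemma solve3 (F : fieldType) (v0 v1 v2 xp xq : F) : xp != xq ->
  v1 + v2 * xp = 0 -> v1 + v2 * xq = 0 -> v0 - 2 * v1 * xp - v2 * xp ^+ 2 = 0 ->
  [/\ v0 = 0, v1 = 0 & v2 = 0].
Proof.
move=> d h1 h2 h3.
have h : v2 * (xp - xq) = 0.
  by rewrite mulrBr -[v2 * xp](addKr v1) h1 -[v2 * xq](addKr v1) h2 subrr.
move/eqP: h; rewrite mulf_eq0 subr_eq0 (negbTE d) orbF => /eqP z2.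
rewrite z2 mul0r addr0 in h1.
by split=> //; move: h3; rewrite z2 h1 mulr0 !mul0r !subr0.
Qed.

Lemma KK_free n (p q : 'I_n) : p != q -> row_free (@KK n).
Proof.
move=> pq; apply/inj_row_free => v h0.
have hl : forall k, (v *m KK n) 0 (lshift n k) = 0 by move=> k; rewrite h0 mxE.
have hr : forall k, (v *m KK n) 0 (rshift n k) = 0 by move=> k; rewrite h0 mxE.
have el : forall k, v 0 (lift ord0 ord0) + v 0 (lift ord0 (lift ord0 ord0)) * xvar k = 0.
  move=> k; move: (hl k); rewrite /KK mul_mx_row row_mxEl mxE !big_ord_recl big_ord0 !mxE.
  by rewrite /= mulr0 add0r mulr1 addr0.
have er : v 0 ord0 - 2 * v 0 (lift ord0 ord0) * xvar p - v 0 (lift ord0 (lift ord0 ord0)) * xvar p ^+ 2 = 0.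
  move: (hr p); rewrite /KK mul_mx_row row_mxEr mxE !big_ord_recl big_ord0 !mxE /=.
  by move=> h; rewrite -[RHS]h; ring.
have xd : xvar p != xvar q by apply: xvar_neq.
have [z0 z1 z2] := solve3 xd (el p) (el q) er.
apply/rowP => r; rewrite mxE.
case: r => [[|[|[|r]]] hr3] //.
- by rewrite -z0; congr (v 0 _); apply: val_inj.
- by rewrite -z1; congr (v 0 _); apply: val_inj.
- by rewrite -z2; congr (v 0 _); apply: val_inj.
Qed.

Lemma e_sym (F : fieldType) (ai aj bi bj xi xj : F) : xi - xj != 0 -> xj - xi != 0 ->
  ai + aj + bi * (xi - xj)^-1 + bj * (xj - xi)^-1 = 0 -> bi - bj = - (ai + aj) * (xi - xj).
Proof.
move=> d1 d2; move/eqP; rewrite -addrA addr_eq0 => /eqP ->; rewrite opprK.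
by field; rewrite d1 d2.
Qed.

Lemma e_flip (F : comRingType) (ai aj bi bj xi xj : F) :
  bj - bi = - (aj + ai) * (xj - xi) -> bi - bj = - (ai + aj) * (xi - xj).
Proof.
move=> h; have -> : bi - bj = - (bj - bi) by ring.
by rewrite h; ring.
Qed.

Lemma rid (F : comRingType) (c1 c2 c3 y : F) :
  c1 * 1 + (c2 * (-2 * y) + (c3 * - y ^+ 2 + 0)) = c1 - 2 * c2 * y - c3 * y ^+ 2.
Proof. by ring. Qed.

Lemma lid (F : comRingType) (c1 c2 c3 y : F) :
  c1 * 0 + (c2 * 1 + (c3 * y + 0)) = c2 + c3 * y.
Proof. by ring. Qed.

Theorem mainTheorem7 (n : nat) (hn : (3 <= n)%N) :
  (forall G : {set 'I_n * 'I_n}, simple_graph G ->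
     (scattering_rank G <= 2 * n - 3)%N) /\
  scattering_rank (complete_graph n) = (2 * n - 3)%N.
Proof.
have n0 : (0 < n)%N by lia.
have n1 : (1 < n)%N by lia.
pose p : 'I_n := Ordinal n0; pose q : 'I_n := Ordinal n1.
have pq : p != q by apply/eqP => /(congr1 val).
have up : forall G : {set 'I_n * 'I_n}, simple_graph G -> (scattering_rank G + 3 <= n + n)%N.
  move=> G sG; have := mxrank_mul_min (KK n) (scattering_matrix G).
  rewrite KK_S // mxrank0 (eqP (KK_free pq)) /scattering_rank => h; lia.
split; first by move=> G sG; have := up G sG; lia.
have sK : simple_graph (complete_graph n) by move=> e; rewrite inE.
set S := scattering_matrix (complete_graph n).
have hk : (kermx S <= KK n)%MS.
  apply/row_subP => i; set v := row i (kermx S).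
  have vS : v *m S = 0 by apply/sub_kermxP; exact: row_sub.
  clearbody v.
  have E1 : forall i j : 'I_n, (i < j)%N ->
     v 0 (lshift n i) + v 0 (lshift n j) + v 0 (rshift n i) * (xvar i - xvar j)^-1
       + v 0 (rshift n j) * (xvar j - xvar i)^-1 = 0.
    move=> i' j lt; have He : (i', j) \in complete_graph n by rewrite inE.
    have := congr1 (fun M : 'M[ratfun n]_(1, #|complete_graph n|) => M 0 (enum_rank_in He (i', j))) vS.
    rewrite /= smat_col enum_rankK_in // col_formula; last by rewrite /= neq_ltn lt.
    by rewrite mxE => h; exact: h.
  have E2 : forall i j : 'I_n, i != j ->
     v 0 (rshift n i) - v 0 (rshift n j)
       = - (v 0 (lshift n i) + v 0 (lshift n j)) * (xvar i - xvar j).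
    move=> i' j ne.
    have d1 : xvar i' - xvar j != 0 by rewrite subr_eq0 xvar_neq.
    have d2 : xvar j - xvar i' != 0 by rewrite subr_eq0 xvar_neq // eq_sym.
    case: (ltngtP i' j) => c.
    - exact: e_sym (E1 _ _ c).
    - by apply: e_flip; exact: e_sym (E1 _ _ c).
    - by move: ne; rewrite (val_inj c) eqxx.
  have [c1 [c2 [c3 hc]]] := kernel_alg (a := fun k => v 0 (lshift n k))
      (b := fun k => v 0 (rshift n k)) pq (@xvar_neq n) E2.
  apply/submxP; exists (\row_(r < 3) [:: c1; c2; c3]`_r).
  rewrite /KK mul_mx_row -[v]hsubmxK; congr row_mx; apply/rowP => k;
    rewrite !mxE !big_ord_recl big_ord0 !mxE /=.
  - by rewrite lid (proj1 (hc k)).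
  - by rewrite rid (proj2 (hc k)).
have := mxrankS hk; rewrite mxrank_ker (eqP (KK_free pq)).
have := up _ sK; rewrite /scattering_rank -/S => h1 h2; lia.
Qed.
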